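(* Let $N, D$ be positive integers with $N \ge 2$, and let $\mathcal{G}$ be the complete graph on $N$ nodes. For any weight matrix $\mathbf{W} \in \mathbb{R}^{D\times D}$, the class $\mathcal{F}_{\mathcal{G},\mathbf{W}}$ of all maps $\hat f : \mathbb{R}^{N\times D} \to \mathbb{R}$ of the form $\hat f = \mathrm{MLP} \circ \mathcal{L}^{\mathrm{conv}}_{\mathcal{G},\mathbf{W}}$, where $\mathcal{L}^{\mathrm{conv}}_{\mathcal{G},\mathbf{W}}(\mathbf{X}) = \tilde{\mathbf{A}}\mathbf{X}\mathbf{W}$ and $\mathrm{MLP}$ ranges over all multilayer perceptrons $\mathbb{R}^{N\times D}\to\mathbb{R}$ with $\mathrm{SiLU}$ activation, is not a universal approximator in $\mathcal{C}(\mathbb{R}^{N\times D})$.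
   Context: $\mathrm{SiLU}(x) = x/(1+e^{-x})$, applied elementwise. $\tilde{\mathbf{A}} \in \mathbb{R}^{N\times N}$ is the degree-normalized adjacency matrix with self-loops: $\tilde{\mathbf{A}}_{ij} = 1/\sqrt{\deg(v_i)\deg(v_j)}$ if $v_i, v_j$ are adjacent or $i=j$, and $0$ otherwise, where degrees count the self-loop; for the complete graph every entry of $\tilde{\mathbf{A}}$ equals $1/N$. MLPs take the matrix input $\mathbf{X}$ (viewed as a vector in $\mathbb{R}^{ND}$) to a real number. $\mathcal{C}(\mathbb{R}^{N\times D})$ denotes the continuous functions $\mathbb{R}^{N\times D}\to\mathbb{R}$. A class $\mathcal{F} \subseteq \mathcal{C}(\mathbb{R}^{N\times D})$ is a universal approximator if for every continuous $f:\mathbb{R}^{N\times D}\to\mathbb{R}$, every $\varepsilon>0$ and every nonempty compact $K \subset \mathbb{R}^{N\times D}$ there is $\hat f \in \mathcal{F}$ with $\max_{\mathbf{X}\in K}|f(\mathbf{X}) - \hat f(\mathbf{X})| < \varepsilon$. *)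

(* Defs.v *)
From HB Require Import structures.
From mathcomp Require Import all_boot all_order all_algebra.
From mathcomp Require Import all_classical all_reals all_analysis.
Set Implicit Arguments. Unset Strict Implicit. Unset Printing Implicit Defensive.
Import Order.TTheory GRing.Theory Num.Theory.
Import numFieldNormedType.Exports.
Local Open Scope classical_set_scope.
Local Open Scope ring_scope.

Definition silu {R : realType} (x : R) : R := x / (1 + expR (- x)).

Inductive mlp (R : realType) : nat -> Type :=
| mlp_out (n : nat) (w : 'cV[R]_n) (c : R) : mlp R n
| mlp_layer (n m : nat) (W : 'M[R]_(n, m)) (b : 'rV[R]_m) (rest : mlp R m) : mlp R n.

Fixpoint mlp_eval (R : realType) (n : nat) (M : mlp R n) : 'rV[R]_n -> R :=
  match M in mlp _ n return 'rV[R]_n -> R with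
  | mlp_out _ w c => fun x => (x *m w) 0 0 + c
  | mlp_layer _ _ W b rest => fun x => mlp_eval rest (map_mx silu (x *m W + b))
  end.

Definition deg_sl (N : nat) (adj : rel 'I_N) (i : 'I_N) : nat :=
  #|[set j : 'I_N | (i == j) || adj i j]|.

Definition norm_adj {R : realType} (N : nat) (adj : rel 'I_N) : 'M[R]_N :=
  \matrix_(i, j) (if (i == j) || adj i j
                  then (Num.sqrt ((deg_sl adj i)%:R * (deg_sl adj j)%:R))^-1
                  else 0).

Definition complete_adj (N : nat) : rel 'I_N := fun i j => i != j.

Definition conv_layer {R : realType} (N D : nat) (adj : rel 'I_N) (W : 'M[R]_D)
  (X : 'M[R]_(N, D)) : 'M[R]_(N, D) := norm_adj adj *m X *m W.

Definition conv_mlp_class {R : realType} (N D : nat) (adj : rel 'I_N) (W : 'M[R]_D)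
  : set ('M[R]_(N, D) -> R) :=
  [set fh | exists M : mlp R (N * D),
      fh = fun X => mlp_eval M (mxvec (conv_layer adj W X))].

Definition universal_approximator {R : realType} (N D : nat)
  (F : set ('M[R]_(N, D) -> R)) : Prop :=
  forall f : 'M[R]_(N, D) -> R, continuous f ->
  forall eps : R, 0 < eps ->
  forall K : set 'M[R]_(N, D), compact K -> K !=set0 ->
  exists2 fh, F fh & forall X, K X -> `|f X - fh X| < eps.

(* Main.v *)
Require Import Defs.
From HB Require Import structures.
From mathcomp Require Import all_boot all_order all_algebra.
From mathcomp Require Import all_classical all_reals all_analysis.
Import Order.TTheory GRing.Theory Num.Theory.
Import numFieldNormedType.Exports.
Local Open Scope classical_set_scope.
Local Open Scope ring_scope.

Lemma deg_complete (N : nat) (i : 'I_N) : deg_sl (@complete_adj N) i = N.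
Proof.
rewrite /deg_sl -[RHS]card_ord; apply: eq_card => j.
apply/idP; rewrite in_setE /= /complete_adj orbN; by [].
Qed.

Lemma conv_delta (R : realType) (N : nat) (a : 'I_N) (i : 'I_N) (j : 'I_N) (D : nat)
  (c : 'I_D) (k : 'I_D) :
  (@norm_adj R N (@complete_adj N) *m delta_mx a c) i k =
  (Num.sqrt (N%:R * N%:R))^-1 * (c == k)%:R.
Proof.
rewrite mxE (bigD1 a) //= big1 ?addr0.
  rewrite !mxE eqxx /complete_adj orbN !deg_complete. by rewrite eq_sym.
move=> l /negPf hl; rewrite !mxE hl /=; by rewrite mulr0.
Qed.

Lemma norm_sub_cont (R : realType) (m n : nat) (A : 'M[R]_(m, n)) :
  continuous (fun X : 'M[R]_(m, n) => `|X - A|).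
Proof.
move=> X; apply: continuous_comp; last exact: norm_continuous.
have h := @continuousD _ _ _ id (fun=> - A) X cvg_id (@cst_continuous _ _ _ _).
move=> B hB; apply: h. exact: hB.
Qed.

Lemma compact2 (R : realType) (m n : nat) (A B : 'M[R]_(m, n)) :
  compact ([set A] `|` [set B]).
Proof. by apply: compactU; exact: compact_set1. Qed.

Lemma two_pos (R : realType) : (0 : R) < 2.
Proof. by rewrite ltr0Sn. Qed.

Theorem theorem1 (R : realType) (N D : nat) (hN : (2 <= N)%N) (hD : (0 < D)%N)
  (W : 'M[R]_D) :
  ~ universal_approximator (conv_mlp_class (@complete_adj N) W).
Proof.
move=> UA.
pose i0 : 'I_N := Ordinal (leq_trans (isT : (0 < 2)%N) hN).
pose i1 : 'I_N := Ordinal hN.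
pose c0 : 'I_D := Ordinal hD.
pose X1 : 'M[R]_(N, D) := delta_mx i0 c0.
pose X2 : 'M[R]_(N, D) := delta_mx i1 c0.
have hX : X2 - X1 != 0.
  apply/eqP => /matrixP /(_ i1 c0); rewrite !mxE eqxx /=.
  by rewrite subr0 => /eqP; rewrite oner_eq0.
pose d := `|X2 - X1|.
have dpos : 0 < d by rewrite normr_gt0.
have fc := @norm_sub_cont R N D X1.
have cK := @compact2 R N D X1 X2.
have [fh [M ->] H] := UA _ fc (d / 2) (divr_gt0 dpos (two_pos R))
  ([set X1] `|` [set X2]) cK
  (ex_intro _ X1 (or_introl erefl)).
have eqc : conv_layer (@complete_adj N) W X1 = conv_layer (@complete_adj N) W X2.
  rewrite /conv_layer; congr (_ *m _); apply/matrixP => i k.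
  by rewrite !conv_delta.
have h1 := H X1 (or_introl erefl).
have h2 := H X2 (or_intror erefl).
rewrite subrr normr0 sub0r normrN eqc in h1.
rewrite -/d in h2.
move: h1 h2; set g := mlp_eval M _.
clearbody d g => h1 h2.
have h3 := ler_normD (d - g) g.
rewrite subrK (ger0_norm (ltW dpos)) in h3.
have h4 : `|d - g| + `|g| < d / 2 + d / 2 by exact: ltrD.
have := le_lt_trans h3 h4.
by rewrite -splitr ltxx.
Qed.
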